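(* Let $f=(f_0,f_1)\in F\times F$ be such that $P_1^f\ll P_0^f$, and let $T$ be an anonymous comparison test that is error-free. Then $P_0^f(\{T(\cdot,f)=0\})<1$.
   Context: Let $\Omega=\{0,1\}$ and let $\Omega^\infty$ be the set of infinite sequences $\omega=(\omega_1,\omega_2,\dots)$ with $\omega_t\in\Omega$; $\omega^t=(\omega_1,\dots,\omega_t)$ denotes the prefix of length $t$ and also the cylinder set $\{\hat\omega\in\Omega^\infty:\hat\omega^t=\omega^t\}$. $\Omega^\infty$ carries the $\sigma$-algebra generated by all cylinders. $\Delta(\Omega)$ is the set of probability distributions on $\Omega$. A forecasting strategy is a function $f:\bigcup_{t\ge 0}(\Omega\times\Delta(\Omega)\times\Delta(\Omega))^t\to\Delta(\Omega)$; $F$ denotes the set of all forecasting strategies. For a pair $f=(f_0,f_1)\in F\times F$ and $\omega\in\Omega^\infty$, the play path $h=h(\omega,f_0,f_1)\in(\Omega\times\Delta(\Omega)\times\Delta(\Omega))^\infty$ is defined recursively by $h^0=\emptyset$ and $h^t=(h^{t-1},(\omega_t,f_0(h^{t-1}),f_1(h^{t-1})))$; $h^n$ denotes its prefix of length $n$ and $h_n$ its suffix starting at coordinate $n$. The pair $f$ induces probability measures $P_0^f,P_1^f$ on $\Omega^\infty$ determined by $P_i^f(\omega^t)=\prod_{n=1}^t f_i(h^{n-1}(\omega,f_0,f_1))[\omega_n]$. A comparison test is a function $T:\Omega^\infty\times F\times F\to\{0,\tfrac12,1\}$, measurable in $\omega$ for each fixed pair; $T=i\in\{0,1\}$ means expert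 $i$ is deemed better informed, $T=\tfrac12$ means inconclusive. Write $\{T(\cdot,f)=k\}=\{\omega: T(\omega,f_0,f_1)=k\}$. $T$ is anonymous if $T(\omega,f_0,f_1)=1-T(\omega,f_1,f_0)$ for all $\omega,f_0,f_1$. $T$ is error-free if for all $f\in F\times F$ and $i\in\{0,1\}$, $P_{1-i}^f(\{T(\cdot,f)=i\})=0$. *)

(* Defs.v *)
From Stdlib Require Import Reals List.
Import ListNotations.
Open Scope R_scope.

(** Omega = {0,1} is [bool] (false = 0, true = 1).
    An infinite sequence omega = (omega_1, omega_2, ...) is [nat -> bool],
    with [w k] standing for omega_{k+1}. *)
Definition Seq := nat -> bool.

(** Delta(Omega): probability distributions on {0,1}, given by the
    probability [p1] of outcome 1. *)
Record Dist := mkDist { p1 : R; p1_nonneg : 0 <= p1; p1_le1 : p1 <= 1 }.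

Definition dprob (d : Dist) (b : bool) : R := if b then p1 d else 1 - p1 d.

(** Finite histories (Omega x Delta x Delta)^t, as lists in chronological order. *)
Definition Hist := list (bool * Dist * Dist).

Definition Strategy := Hist -> Dist.

Fixpoint hist (w : Seq) (f0 f1 : Strategy) (t : nat) : Hist :=
  match t with
  | O => []
  | S n => hist w f0 f1 n ++ [(w n, f0 (hist w f0 f1 n), f1 (hist w f0 f1 n))]
  end.

Definition cyl (w : Seq) (t : nat) : Seq -> Prop :=
  fun v => forall k, (k < t)%nat -> v k = w k.

Inductive measurable : (Seq -> Prop) -> Prop :=
  | meas_cyl : forall w t, measurable (cyl w t)
  | meas_compl : forall A, measurable A -> measurable (fun v => ~ A v)
  | meas_cunion : forall A : nat -> Seq -> Prop,
      (forall n, measurable (A n)) -> measurable (fun v => exists n, A n v)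
  | meas_ext : forall A B, measurable A -> (forall v, A v <-> B v) -> measurable B.

Record ProbMeasure := mkPM {
  mu : (Seq -> Prop) -> R;
  mu_nonneg : forall A, measurable A -> 0 <= mu A;
  mu_full : mu (fun _ => True) = 1;
  mu_sigma_add : forall A : nat -> Seq -> Prop,
      (forall n, measurable (A n)) ->
      (forall m n v, m <> n -> A m v -> A n v -> False) ->
      infinite_sum (fun n => mu (A n)) (mu (fun v => exists n, A n v))
}.

Fixpoint cyl_prob (fi : Strategy) (w : Seq) (f0 f1 : Strategy) (t : nat) : R :=
  match t with
  | O => 1
  | S n => cyl_prob fi w f0 f1 n * dprob (fi (hist w f0 f1 n)) (w n)
  end.

(** [P] is the measure P_i^f induced by the pair f = (f0,f1) for expert i
    (i = false means expert 0, i = true means expert 1). *)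
Definition is_induced (f0 f1 : Strategy) (i : bool) (P : ProbMeasure) : Prop :=
  forall w t, mu P (cyl w t) = cyl_prob (if i then f1 else f0) w f0 f1 t.

Definition abs_cont (P Q : ProbMeasure) : Prop :=
  forall A, measurable A -> mu Q A = 0 -> mu P A = 0.

Inductive Verdict := V0 | Vhalf | V1.

Definition vflip (v : Verdict) : Verdict :=
  match v with V0 => V1 | Vhalf => Vhalf | V1 => V0 end.

Definition vof (i : bool) : Verdict := if i then V1 else V0.

Definition Test := Seq -> Strategy -> Strategy -> Verdict.

Definition test_measurable (T : Test) : Prop :=
  forall f0 f1 k, measurable (fun w => T w f0 f1 = k).

Definition anonymous (T : Test) : Prop :=
  forall w f0 f1, T w f0 f1 = vflip (T w f1 f0).

Definition error_free (T : Test) : Prop :=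
  forall (f0 f1 : Strategy) (i : bool) (P : ProbMeasure),
    is_induced f0 f1 (negb i) P -> mu P (fun w => T w f0 f1 = vof i) = 0.

(* Main.v *)
Require Import Defs.
From Stdlib Require Import Reals Lra Lia FunctionalExtensionality PropExtensionality.
Open Scope R_scope.

Lemma pred_ext (A B : Seq -> Prop) : (forall v, A v <-> B v) -> A = B.
Proof. intros H; apply functional_extensionality; intro v; apply propositional_extensionality; auto. Qed.

Lemma meas_full : measurable (fun _ => True).
Proof. apply (meas_ext (cyl (fun _ => true) 0)). constructor. intros v; split; auto.
  intros _ k Hk; lia. Qed.

Lemma meas_empty : measurable (fun _ => False).
Proof. apply (meas_ext (fun v => ~ True)). constructor. exact meas_full. intros v; tauto. Qed.

Lemma const_sum_zero (c : R) : infinite_sum (fun _ => c) c -> c = 0.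
Proof.
  intros H. destruct (Req_dec c 0) as [|Hc]; auto.
  assert (Hp : Rabs c / 2 > 0) by (apply Rabs_pos_lt in Hc; lra).
  destruct (H _ Hp) as [N HN].
  assert (Hs : forall n, sum_f_R0 (fun _ => c) n = INR (S n) * c).
  { induction n; simpl sum_f_R0. simpl; lra. rewrite IHn. rewrite (S_INR (S n)). lra. }
  specialize (HN (S N) ltac:(lia)). unfold Rdist in HN. rewrite Hs in HN.
  replace (INR (S (S N)) * c - c) with (INR (S N) * c) in HN
    by (rewrite (S_INR (S N)); lra).
  rewrite Rabs_mult, Rabs_right in HN by (apply Rle_ge, pos_INR).
  assert (1 <= INR (S N)) by (rewrite S_INR; pose proof (pos_INR N); lra).
  pose proof (Rabs_pos c). nra.
Qed.

Lemma mu_empty (P : ProbMeasure) : mu P (fun _ => False) = 0.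
Proof.
  pose proof (mu_sigma_add P (fun _ _ => False) (fun _ => meas_empty) ltac:(tauto)) as H.
  simpl in H.
  assert (E : (fun v : Seq => exists _ : nat, False) = (fun _ : Seq => False)).
  { apply pred_ext; intros v; split; [intros [_ []]|tauto]. }
  rewrite E in H. apply const_sum_zero; exact H.
Qed.

Lemma mu_compl (P : ProbMeasure) (A : Seq -> Prop) : measurable A ->
  mu P A + mu P (fun v => ~ A v) = 1.
Proof.
  intros HA.
  set (B := fun n : nat => match n with 0%nat => A | 1%nat => (fun v => ~ A v) | _ => (fun _ => False) end).
  assert (HB : forall n, measurable (B n)).
  { intros [|[|n]]; simpl; auto. constructor; auto. apply meas_empty. }
  assert (HD : forall m n v, m <> n -> B m v -> B n v -> False).
  { intros [|[|m]] [|[|n]] v; simpl; try tauto; intros; lia. }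
  pose proof (mu_sigma_add P B HB HD) as H.
  replace (fun v => exists n, B n v) with (fun _ : Seq => True) in H.
  2:{ apply pred_ext; intros v; split; auto. intros _.
      destruct (Classical_Prop.classic (A v)); [exists 0%nat|exists 1%nat]; simpl; auto. }
  rewrite mu_full in H.
  assert (H2 : infinite_sum (fun n => mu P (B n)) (mu P A + mu P (fun v => ~ A v))).
  { intros e He. exists 1%nat. intros n Hn.
    assert (forall k, sum_f_R0 (fun n => mu P (B n)) (S k) = mu P A + mu P (fun v => ~ A v)).
    { induction k. simpl. reflexivity. simpl sum_f_R0 in *. rewrite IHk.
      simpl. rewrite mu_empty. lra. }
    destruct n; [lia|]. rewrite H0. unfold Rdist. rewrite Rminus_diag, Rabs_R0. lra. }
  symmetry. exact (uniqueness_sum _ _ _ H H2).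
Qed.

Theorem mainTheorem1 (f0 f1 : Strategy) (P0 P1 : ProbMeasure)
  (HP0 : is_induced f0 f1 false P0) (HP1 : is_induced f0 f1 true P1)
  (Hac : abs_cont P1 P0)
  (T : Test) (HTm : test_measurable T) (HTa : anonymous T) (HTe : error_free T) :
  mu P0 (fun w => T w f0 f1 = V0) < 1.
Proof.
  set (A := fun w => T w f0 f1 = V0).
  assert (HA : measurable A) by apply HTm.
  pose proof (HTe f0 f1 false P1 HP1) as H1. simpl in H1. fold A in H1.
  destruct (Rlt_or_le (mu P0 A) 1) as [|Hge]; auto.
  exfalso.
  pose proof (mu_compl P0 A HA). pose proof (mu_compl P1 A HA).
  pose proof (mu_nonneg P0 _ (meas_compl A HA)).
  assert (mu P0 (fun v => ~ A v) = 0) by lra.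
  pose proof (Hac _ (meas_compl A HA) H3). lra.
Qed.
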